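(* Suppose $a:[0,x_J]\times\mathcal T\to[0,\infty)$ is convex in its first argument and the reals $e^1_{j,n},e^2_{j,n},v_{j,n}$ ($0\le j\le J$, $1\le n\le N$), $d^1_{j,n},d^2_{j,n}$ ($1\le n\le N-1$) are feasible for $\mathbf L_H^{\mathcal X,\mathcal T}$ (with $a$ restricted to $\mathcal X\times\mathcal T$). Then the extended semi-static strategy described in the context super-replicates the American claim along all paths with $X_{t_n}\in[0,x_J]$ for $1\le n\le N$: for every $(y_1,\dots,y_N)\in[0,x_J]^N$ and every exercise time $\rho\in\mathcal T$, its terminal payoff satisfies $\mathcal G_T\ge a(y_{\mathcal N(\rho)},\rho)$, where $\mathcal N(\rho)=\min\{n:t_n\ge\rho\}$.
   Context: Fix $N\ge1$, $J\ge1$, times $0=t_0<t_1<\dots<t_N=T$, $\mathcal T=\{t_1,\dots,t_N\}$, strikes $0=x_0<x_1<\dots<x_J$, $\mathcal X=\{x_0,\dots,x_J\}$ and numbers $p_{j,n}$. $\mathbf L_H^{\mathcal X,\mathcal T}$ is the linear program: over reals $e^1_{j,n},e^2_{j,n},v_{j,n}$ ($1\le n\le N$) and $d^1_{j,n},d^2_{j,n}$ ($1\le n\le N-1$), with $e^1_{j,N}=e^2_{j,1}=0$, minimise $\sum_{j,n}(e^1_{j,n}+e^2_{j,n})p_{j,n}+\sum_jv_{j,N}p_{j,N}$ subject to $v_{j,n}\ge0$ and (i) $v_{j,n}\ge a(x_j,t_n)$; (ii) $e^1_{j,n}+e^2_{k,n+1}+(x_k-x_j)d^1_{j,n}\ge0$;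 (iii) $e^1_{j,n}+e^2_{k,n+1}+(x_k-x_j)d^2_{j,n}-v_{j,n}+v_{k,n+1}\ge0$ for $0\le j,k\le J$, $1\le n\le N-1$. Linear interpolation of $(h_j)_{0\le j\le J}$: $\bar h(x)=\frac{x_{j+1}-x}{x_{j+1}-x_j}h_j+\frac{x-x_j}{x_{j+1}-x_j}h_{j+1}$ for $x_j\le x\le x_{j+1}$. Write $\bar e^1_n,\bar e^2_n,\bar v_n$ for the linear interpolations of $(e^1_{j,n})_j$, $(e^2_{j,n})_j$, $(v_{j,n})_j$. Mixed interpolation: with $u^1_{j,n}=\frac{e^1_{j+1,n}-e^1_{j,n}}{x_{j+1}-x_j}$, $u^2_{j,n}=\frac{(e^1_{j+1,n}-v_{j+1,n})-(e^1_{j,n}-v_{j,n})}{x_{j+1}-x_j}$, set $\tilde d^\delta_n(x_j)=d^\delta_{j,n}$ and for $x\in(x_j,x_{j+1})$: $\tilde d^\delta_n(x)=d^\delta_{j,n}$ if $d^\delta_{j,n}\le u^\delta_{j,n}$; $=d^\delta_{j+1,n}$ if $d^\delta_{j,n}>u^\delta_{j,n}$ and $d^\delta_{j+1,n}\ge u^\delta_{j,n}$; $=u^\delta_{j,n}$ if $d^\delta_{j+1,n}<u^\delta_{j,n}<d^\delta_{j,n}$. The extended strategy holds European claims (portfolios of calls with strikes in $\mathcal X$) paying $\bar e^1_n(X_{t_n})+\bar e^2_n(X_{t_n})$ at $t_n$ for each $n$ and additionally $\bar v_N(X_{t_N})$ at $t_N$, and over $[t_n,t_{n+1}]$ holds $\tilde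 d^1_n(X_{t_n})$ shares if $n<\mathcal N(\rho)$ and $\tilde d^2_n(X_{t_n})$ shares if $n\ge\mathcal N(\rho)$. Its terminal payoff along $(y_1,\dots,y_N)$ with exercise at $\rho$ is $\mathcal G_T=\sum_{n=1}^N(\bar e^1_n(y_n)+\bar e^2_n(y_n))+\bar v_N(y_N)+\sum_{n=1}^{\mathcal N(\rho)-1}(y_{n+1}-y_n)\tilde d^1_n(y_n)+\sum_{n=\mathcal N(\rho)}^{N-1}(y_{n+1}-y_n)\tilde d^2_n(y_n)$. *)

(* Defs.v *)
From HB Require Import structures.
From mathcomp Require Import all_boot all_order all_algebra.
From mathcomp Require Import reals.
Set Implicit Arguments. Unset Strict Implicit. Unset Printing Implicit Defensive.
Import Order.TTheory GRing.Theory Num.Theory.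
Local Open Scope ring_scope.

Section Defs.
Variable R : realType.

(* Index of the interpolation segment containing y: the largest j < J with
   x_j <= y.  For strictly increasing x with x_0 = 0 and y in [0, x_J] this
   gives x_j <= y <= x_{j+1}. *)
Definition seg (x : nat -> R) (J : nat) (y : R) : nat :=
  (\max_(j < J | (x j <= y)%R) (j : nat))%N.

Definition lin_interp (x : nat -> R) (J : nat) (h : nat -> R) (y : R) : R :=
  let j := seg x J y in
  ((x j.+1 - y) / (x j.+1 - x j)) * h j + ((y - x j) / (x j.+1 - x j)) * h j.+1.

Definition mixed_interp (x : nat -> R) (J : nat) (d u : nat -> R) (y : R) : R :=
  let j := seg x J y in
  if y == x j then d j
  else if y == x j.+1 then d j.+1
  else if d j <= u j then d j
  else if u j <= d j.+1 then d j.+1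
  else u j.

Definition calN (t : nat -> R) (N : nat) (rho : R) : nat :=
  (1 + find (fun n : nat => (rho <= t n)%R) (iota 1 N))%N.

Definition LP_feasible (N J : nat) (t x : nat -> R) (a : R -> R -> R)
  (e1 e2 v d1 d2 : nat -> nat -> R) : Prop :=
  (forall j, (j <= J)%N -> e1 j N = 0) /\
  (forall j, (j <= J)%N -> e2 j 1%N = 0) /\
  (forall j n, (j <= J)%N -> (1 <= n <= N)%N ->
     0 <= v j n /\ a (x j) (t n) <= v j n) /\
  (forall j k n, (j <= J)%N -> (k <= J)%N -> (1 <= n <= N.-1)%N ->
     0 <= e1 j n + e2 k n.+1 + (x k - x j) * d1 j n /\
     0 <= e1 j n + e2 k n.+1 + (x k - x j) * d2 j n - v j n + v k n.+1).

Definition u1 (x : nat -> R) (e1 : nat -> nat -> R) (n j : nat) : R :=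
  (e1 j.+1 n - e1 j n) / (x j.+1 - x j).
Definition u2 (x : nat -> R) (e1 v : nat -> nat -> R) (n j : nat) : R :=
  ((e1 j.+1 n - v j.+1 n) - (e1 j n - v j n)) / (x j.+1 - x j).

Definition payoff (N J : nat) (t x : nat -> R) (e1 e2 v d1 d2 : nat -> nat -> R)
  (y : nat -> R) (rho : R) : R :=
  let m := calN t N rho in
  \sum_(1 <= n < N.+1)
     (lin_interp x J (fun j => e1 j n) (y n) + lin_interp x J (fun j => e2 j n) (y n))
  + lin_interp x J (fun j => v j N) (y N)
  + \sum_(1 <= n < m)
      (y n.+1 - y n) * mixed_interp x J (fun j => d1 j n) (u1 x e1 n) (y n)
  + \sum_(m <= n < N)
      (y n.+1 - y n) * mixed_interp x J (fun j => d2 j n) (u2 x e1 v n) (y n).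

End Defs.

(* Main.v *)
Require Import Defs.
From HB Require Import structures.
From mathcomp Require Import all_boot all_order all_algebra.
From mathcomp Require Import reals ring lra.
Import Order.TTheory GRing.Theory Num.Theory.
Local Open Scope ring_scope.

Section H.
Variable R : realType.
Implicit Types (x : nat -> R).

Lemma seg_spec x J y : (1 <= J)%N -> x 0%N = 0 -> 0 <= y ->
  (forall j, (j < J)%N -> x j < x j.+1) -> y <= x J ->
  [/\ (seg x J y < J)%N, x (seg x J y) <= y & y <= x (seg x J y).+1].
Proof.
case: J => // J _ x0 y0 incr yJ.
have P0 : (fun j : 'I_J.+1 => x j <= y) ord0 by rewrite /= x0.
rewrite /seg (@bigop.bigmax_eq_arg _ ord0 _ _ P0).
case: arg_maxnP => //= i Pi maxi.
split => //.
have := ltn_ord i; rewrite ltnS leq_eqVlt => /orP[/eqP ->//|lt].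
rewrite leNgt; apply/negP => h.
have := maxi (Ordinal (lt : (i.+1 < J.+1)%N)) (ltW h).
by rewrite /= ltnn.
Qed.

Lemma x_mono x J i k : (forall j, (j < J)%N -> x j < x j.+1) ->
  (i <= k)%N -> (k <= J)%N -> x i <= x k.
Proof.
move=> incr; elim: k => [|k IH]; first by rewrite leqn0 => /eqP ->.
rewrite leq_eqVlt => /orP[/eqP -> //|]; rewrite ltnS => ik kJ.
apply: le_trans (IH ik (ltnW kJ)) _; exact/ltW/incr.
Qed.

Definition slope x (F : nat -> R) := fun j => (F j.+1 - F j) / (x j.+1 - x j).

Lemma lin_at x J F y : x (seg x J y) < x (seg x J y).+1 ->
  lin_interp x J F y = F (seg x J y) + slope x F (seg x J y) * (y - x (seg x J y)).
Proof.
rewrite /lin_interp /slope => h.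
have : x (seg x J y).+1 - x (seg x J y) != 0 by rewrite subr_eq0 gt_eqF.
move: (x (seg x J y).+1) (x (seg x J y)) h => a b _ hne.
by field.
Qed.

Lemma key_pt x J F d Gk xk y :
  let j := seg x J y in
  x j <= y -> y <= x j.+1 -> x j < x j.+1 ->
  0 <= F j + Gk + (xk - x j) * d j ->
  0 <= F j.+1 + Gk + (xk - x j.+1) * d j.+1 ->
  xk <= x j \/ x j.+1 <= xk ->
  0 <= lin_interp x J F y + Gk + (xk - y) * mixed_interp x J d (slope x F) y.
Proof.
move=> j h1 h2 h3 A0 A1 hk.
rewrite lin_at // -/j.
set u := slope x F j.
have hu : F j.+1 = F j + u * (x j.+1 - x j).
  rewrite /u /slope divfK ?subrKC //; by rewrite subr_eq0 gt_eqF.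
rewrite /mixed_interp -/j -/u; clearbody u.
case: eqP => [->|ne1]; first by rewrite subrr mulr0 addr0.
case: eqP => [->|ne2]; first by rewrite -hu.
case: ifP => [hd|/negbT hd].
  have := mulr_ge0 (ltac:(by rewrite subr_ge0; exact: h1) : 0 <= y - x j) (ltac:(by rewrite subr_ge0; exact: hd) : 0 <= u - d j).
  nra.
case: ifP => [hd'|/negbT hd'].
  have := mulr_ge0 (ltac:(by rewrite subr_ge0; exact: h2) : 0 <= x j.+1 - y) (ltac:(by rewrite subr_ge0; exact: hd') : 0 <= d j.+1 - u).
  rewrite hu in A1; nra.
rewrite -ltNge in hd; rewrite -ltNge in hd'.
case: hk => hk.
  have := mulr_ge0 (ltac:(by rewrite subr_ge0; exact: hk) : 0 <= x j - xk) (ltac:(by rewrite subr_ge0; exact: (ltW hd)) : 0 <= d j - u).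
  nra.
have := mulr_ge0 (ltac:(by rewrite subr_ge0; exact: hk) : 0 <= xk - x j.+1) (ltac:(by rewrite subr_ge0; exact: (ltW hd')) : 0 <= u - d j.+1).
rewrite hu in A1; nra.
Qed.

Lemma key_ineq x J F G d y z : (1 <= J)%N -> x 0%N = 0 ->
  (forall j, (j < J)%N -> x j < x j.+1) ->
  0 <= y <= x J -> 0 <= z <= x J ->
  (forall j k, (j <= J)%N -> (k <= J)%N -> 0 <= F j + G k + (x k - x j) * d j) ->
  0 <= lin_interp x J F y + lin_interp x J G z + (z - y) * mixed_interp x J d (slope x F) y.
Proof.
move=> J1 x0 incr /andP[y0 yJ] /andP[z0 zJ] A.
have [jJ h1 h2] := @seg_spec x J y J1 x0 y0 incr yJ.
set j := seg x J y in jJ h1 h2.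
have h3 : x j < x j.+1 by exact: incr.
have Hk : forall k, (k <= J)%N ->
  0 <= lin_interp x J F y + G k + (x k - y) * mixed_interp x J d (slope x F) y.
  move=> k0 kJ; apply: key_pt => //.
  - exact: A (ltnW jJ) kJ.
  - exact: A jJ kJ.
  case: (leqP k0 j) => kj; [left|right]; apply: (@x_mono x J) => //; exact: ltnW.
have [kJ' g1 g2] := @seg_spec x J z J1 x0 z0 incr zJ.
set k := seg x J z in kJ' g1 g2.
have g3 : x k < x k.+1 by exact: incr.
have H0 := Hk k (ltnW kJ'). have H1 := Hk k.+1 kJ'.
set L := lin_interp x J F y in H0 H1 *.
set D := mixed_interp x J d (slope x F) y in H0 H1 *.
have hne : x k.+1 - x k != 0 by rewrite subr_eq0 gt_eqF.
have -> : L + lin_interp x J G z + (z - y) * D =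
   (x k.+1 - z) / (x k.+1 - x k) * (L + G k + (x k - y) * D) +
   (z - x k) / (x k.+1 - x k) * (L + G k.+1 + (x k.+1 - y) * D).
  rewrite /lin_interp -/k.
  by move: (x k.+1) (x k) hne => a b hne; field.
apply: addr_ge0; apply: mulr_ge0 => //; apply: divr_ge0; rewrite subr_ge0 //; exact: ltW.
Qed.

Lemma lin_add x J f g y :
  lin_interp x J (fun j => f j + g j) y = lin_interp x J f y + lin_interp x J g y.
Proof. rewrite /lin_interp; ring. Qed.

Lemma lin_sub x J f g y :
  lin_interp x J (fun j => f j - g j) y = lin_interp x J f y - lin_interp x J g y.
Proof. rewrite /lin_interp; ring. Qed.

Lemma lin_zero x J f y : (1 <= J)%N -> x 0%N = 0 ->
  (forall j, (j < J)%N -> x j < x j.+1) -> 0 <= y <= x J ->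
  (forall j, (j <= J)%N -> f j = 0) -> lin_interp x J f y = 0.
Proof.
move=> J1 x0 incr /andP[y0 yJ] f0.
have [jJ _ _] := @seg_spec x J y J1 x0 y0 incr yJ.
by rewrite /lin_interp f0 ?f0 ?(ltnW jJ) // !mulr0 addr0.
Qed.

Lemma lin_convex x J (f : nat -> R) (c : R -> R) y : (1 <= J)%N -> x 0%N = 0 ->
  (forall j, (j < J)%N -> x j < x j.+1) -> 0 <= y <= x J ->
  (forall y z l, 0 <= y <= x J -> 0 <= z <= x J -> 0 <= l <= 1 ->
     c (l * y + (1 - l) * z) <= l * c y + (1 - l) * c z) ->
  (forall j, (j <= J)%N -> c (x j) <= f j) ->
  c y <= lin_interp x J f y.
Proof.
move=> J1 x0 incr /andP[y0 yJ] cv fc.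
have [jJ h1 h2] := @seg_spec x J y J1 x0 y0 incr yJ.
rewrite /lin_interp.
set j := seg x J y in jJ h1 h2 *.
have h3 : x j < x j.+1 by exact: incr.
have hne : x j.+1 - x j != 0 by rewrite subr_eq0 gt_eqF.
have hpos : 0 < x j.+1 - x j by rewrite subr_gt0.
set l := (x j.+1 - y) / (x j.+1 - x j).
have -> : (y - x j) / (x j.+1 - x j) = 1 - l.
  by rewrite /l; move: (x j.+1) (x j) hne => a b hne; field.
have xin : forall i, (i <= J)%N -> 0 <= x i <= x J.
  move=> i iJ; apply/andP; split; last exact: (@x_mono x J).
  rewrite -x0; exact: (@x_mono x J).
have l0 : 0 <= l by apply: divr_ge0; [rewrite subr_ge0 | exact: ltW hpos].
have l1 : l <= 1 by rewrite /l ler_pdivrMr // mul1r lerD2l lerN2.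
have E : l * x j + (1 - l) * x j.+1 = y.
  by rewrite /l; move: (x j.+1) (x j) hne => a b hne; field.
have := cv (x j) (x j.+1) l (xin _ (ltnW jJ)) (xin _ jJ) ltac:(by rewrite l0 l1).
rewrite E => /le_trans; apply.
apply: lerD; apply: ler_wpM2l; rewrite ?subr_ge0 //; apply: fc => //; exact: ltnW.
Qed.

Lemma sum_bound (N m : nat) (P Q W A B : nat -> R) :
  (1 <= m <= N)%N -> Q 1%N = 0 -> P N = 0 ->
  (forall n, (1 <= n < N)%N -> 0 <= P n + Q n.+1 + A n) ->
  (forall n, (1 <= n < N)%N -> 0 <= P n + Q n.+1 + B n - W n + W n.+1) ->
  W m <= \sum_(1 <= n < N.+1) (P n + Q n) + W N + \sum_(1 <= n < m) A n
         + \sum_(m <= n < N) B n.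
Proof.
move=> /andP[m1 mN] Q1 PN HA HB.
have N1 : (1 <= N)%N by apply: leq_trans mN.
have -> : \sum_(1 <= n < N.+1) (P n + Q n) = \sum_(1 <= n < N) (P n + Q n.+1).
  rewrite !big_split /= big_nat_recr //= PN addr0 [\sum_(1 <= i < N.+1) _]big_ltn ?ltnS // Q1 add0r.
  by rewrite [\sum_(2 <= i < N.+1) _]big_add1.
rewrite (@big_cat_nat _ _ _ m) //=.
have S1 : 0 <= \sum_(1 <= n < m) (P n + Q n.+1) + \sum_(1 <= n < m) A n.
  rewrite -big_split /= big_seq_cond; apply: sumr_ge0 => n /andP[]; rewrite mem_index_iota => /andP[n1 nm] _.
  apply: HA; rewrite n1 /=.
  exact: leq_trans nm mN.
have S2 : W m - W N <= \sum_(m <= n < N) (P n + Q n.+1) + \sum_(m <= n < N) B n.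
  have -> : W m - W N = \sum_(m <= n < N) (W n - W n.+1).
    by rewrite -opprB -telescope_sumr // -sumrN; apply: eq_bigr => n _; rewrite opprB.
  rewrite -big_split /=; apply: ler_sum_nat => n /andP[mn nN].
  have := HB n; rewrite (leq_trans m1 mn) nN => /(_ isT); lra.
lra.
Qed.

Lemma calN_t (t : nat -> R) N m : (forall n, (n < N)%N -> t n < t n.+1) ->
  (1 <= m <= N)%N -> calN t N (t m) = m.
Proof.
move=> incr /andP[m1 mN].
have tmono : forall i k, (i < k)%N -> (k <= N)%N -> t i < t k.
  move=> i; elim=> // k IH; rewrite ltnS leq_eqVlt => /orP[/eqP -> kN|ik kN].
    exact: incr.
  apply: lt_trans (IH ik (ltnW kN)) _; exact: incr.
rewrite /calN.
have -> : N = ((m.-1) + (N - m).+1)%N by rewrite -addSnnS prednK // subnKC.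
rewrite iotaD find_cat.
have -> : has (fun n : nat => t m <= t n) (iota 1 m.-1) = false.
  apply/hasPn => n; rewrite mem_iota => /andP[_ nm].
  rewrite -ltNge; apply: tmono => //.
  by move: nm; rewrite add1n prednK.
rewrite size_iota /= !add1n !prednK // lexx addn0 ?prednK //.
Qed.

End H.

Theorem mainTheorem8 (R : realType) (N J : nat) (t x : nat -> R)
  (a : R -> R -> R) (e1 e2 v d1 d2 : nat -> nat -> R) :
  (1 <= N)%N -> (1 <= J)%N ->
  t 0%N = 0 -> (forall n, (n < N)%N -> t n < t n.+1) ->
  x 0%N = 0 -> (forall j, (j < J)%N -> x j < x j.+1) ->
  (* a : [0,x_J] x T -> [0,oo), convex in its first argument *)
  (forall y n, 0 <= y <= x J -> (1 <= n <= N)%N -> 0 <= a y (t n)) ->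
  (forall n y z l, (1 <= n <= N)%N -> 0 <= y <= x J -> 0 <= z <= x J ->
     0 <= l <= 1 ->
     a (l * y + (1 - l) * z) (t n) <= l * a y (t n) + (1 - l) * a z (t n)) ->
  LP_feasible N J t x a e1 e2 v d1 d2 ->
  forall (y : nat -> R) (rho : R),
    (forall n, (1 <= n <= N)%N -> 0 <= y n <= x J) ->
    (exists2 m, (1 <= m <= N)%N & rho = t m) ->
    a (y (calN t N rho)) rho <= payoff N J t x e1 e2 v d1 d2 y rho.
Proof.
move=> N1 J1 t0 tinc x0 xinc apos conv [He1 [He2 [Hv Hd]]] y rho Hy [m Hm ->].
rewrite /payoff !calN_t //.
apply: (@le_trans _ _ (lin_interp x J (fun j => v j m) (y m))).
  apply: (@lin_convex R x J _ (fun z => a z (t m))) => //; first exact: Hy.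
    by move=> y1 z1 l h1 h2 h3; apply: conv.
  by move=> j jJ; have [] := Hv j m jJ Hm.
have nrange : forall n, (1 <= n < N)%N -> (1 <= n <= N)%N /\ (1 <= n.+1 <= N)%N /\ (1 <= n <= N.-1)%N.
  move=> n /andP[n1 nN]; rewrite n1 (ltnW nN) nN /= -ltnS prednK //.
apply: (@sum_bound R N m
  (fun n => lin_interp x J (fun j => e1 j n) (y n))
  (fun n => lin_interp x J (fun j => e2 j n) (y n))
  (fun n => lin_interp x J (fun j => v j n) (y n))
  (fun n => (y n.+1 - y n) * mixed_interp x J (fun j => d1 j n) (u1 x e1 n) (y n))
  (fun n => (y n.+1 - y n) * mixed_interp x J (fun j => d2 j n) (u2 x e1 v n) (y n))) => //.
- apply: lin_zero => //; try (by move=> j jJ; apply: He2); by apply: Hy; rewrite leqnn N1.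
- apply: lin_zero => //; try (by move=> j jJ; apply: He1); by apply: Hy; rewrite N1 leqnn.
- move=> n /nrange [r1 [r2 r3]].
  have := @key_ineq R x J (fun j => e1 j n) (fun j => e2 j n.+1) (fun j => d1 j n)
    (y n) (y n.+1) J1 x0 xinc (Hy n r1) (Hy n.+1 r2).
  apply => j k jJ kJ; by have [] := Hd j k n jJ kJ r3.
- move=> n /nrange [r1 [r2 r3]].
  have := @key_ineq R x J (fun j => e1 j n - v j n) (fun j => e2 j n.+1 + v j n.+1) (fun j => d2 j n)
    (y n) (y n.+1) J1 x0 xinc (Hy n r1) (Hy n.+1 r2).
  rewrite lin_sub lin_add.
  have -> : @slope R x (fun j => e1 j n - v j n) = u2 x e1 v n by [].
  move=> H.
  have HF : forall j k, (j <= J)%N -> (k <= J)%N ->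
      0 <= (e1 j n - v j n) + (e2 k n.+1 + v k n.+1) + (x k - x j) * d2 j n.
    move=> j k jJ kJ; have [_ h] := Hd j k n jJ kJ r3.
    apply: (le_trans h); rewrite le_eqVlt; apply/orP; left; apply/eqP; ring.
  move/(_ HF): H => H.
  apply: (le_trans H); rewrite le_eqVlt; apply/orP; left; apply/eqP; ring.
Qed.
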